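(* Let $(S,V)$ be a complete semiring-semimodule pair, let $S'\subseteq S$ contain $0$ and $1$, and let $\mathcal P=(n,\Gamma,I,M,P,p_0,l)$ be an $S'$-$\omega$-pushdown automaton. Set $x_0=I(M^* )_{p_0,\epsilon}P\in S$, $[i,p,j]=((M^* )_{p,\epsilon})_{i,j}\in S$, $z_0=I(M^{\omega,l})_{p_0}\in V$ and $[i,p]=((M^{\omega,l})_p)_i\in V$ for $p\in\Gamma$, $1\le i,j\le n$. Then these values satisfy the system $$x_0=\sum_{1\le m_1,m_2\le n}I_{m_1}[m_1,p_0,m_2]P_{m_2},$$ $$[i,p,j]=\sum_{k\ge0}\sum_{p_1,\dots,p_k\in\Gamma}\sum_{1\le m_1,\dots,m_k\le n}(M_{p,p_1\dots p_k})_{i,m_1}[m_1,p_1,m_2][m_2,p_2,m_3]\cdots[m_k,p_k,j]\quad(p\in\Gamma,\ 1\le i,j\le n),$$ $$z_0=\sum_{1\le m\le n}I_m[m,p_0],$$ $$[i,p]=\sum_{k\ge1}\sum_{p_1,\dots,p_k\in\Gamma}\sum_{1\le j\le k}\sum_{1\le m_1,\dots,m_j\le n}(M_{p,p_1\dots p_k})_{i,m_1}[m_1,p_1,m_2]\cdots[m_{j-1},p_{j-1},m_j][m_j,p_j]\quad(p\in\Gamma,\ 1\le i\le n)$$ (this solution is called the solution of order $l$), and $\|\mathcal P\|=(I(M^* )_{p_0,\epsilon}P,\ I(M^{\omega,l})_{p_0})$.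
   Context: A complete semiring-semimodule pair $(S,V)$ (in the sense of Ésik and Kuich, ''Modern Automata Theory'') consists of a complete starsemiring $S$ (arbitrary sums with infinite associativity/commutativity/distributivity laws, star $s^*=\sum_{j\ge0}s^j$) and a complete $S$-semimodule $V$, with infinite products $\prod_{j\ge1}s_j\in V$ of sequences in $S$ satisfying the axioms of that framework. In the second equation the term for $k=0$ is $(M_{p,\epsilon})_{i,j}$, and in general the last triple is $[m_k,p_k,j]$ (i.e. $m_{k+1}=j$). A pushdown transition matrix $M\in (S'^{n\times n})^{\Gamma^*\times\Gamma^*}$ ($\Gamma^*\times\Gamma^*$ matrix with $n\times n$ blocks over $S'$) satisfies (i) for each $p\in\Gamma$ only finitely many blocks $M_{p,\pi}$ are nonzero, and (ii) $M_{\pi_1,\pi_2}=M_{p,\pi}$ if $\pi_1=p\pi'$, $\pi_2=\pi\pi'$ for some $p\in\Gamma$, $\pi,\pi'\in\Gamma^*$, and $0$ otherwise. An $S'$-$\omega$-pushdown automaton $\mathcal P=(n,\Gamma,I,M,P,p_0,l)$ consists of $n\ge1$ (states $1,\dots,n$), an alphabet $\Gamma$, such an $M$, $I\in S'^{1\times n}$, $P\in S'^{n\times 1}$, $p_0\in\Gamma$ and $l\in\{0,\dots,n\}$. $M^*=\sum_{m\ge0}M^m$ with blocks $(M^* )_{\pi,\pi'}$; with $P_l=\{(j_1,j_2,\dots)\in\{1,\dots,n\}^\omega\mid j_t\le l\text{ for infinitely many }t\}$, $M^{\omega,l}\in (V^n)^{\Gamma^*}$ is given by $((M^{\omega,l})_\pi)_i=\sum_{\pi_1,\pi_2,\ldots\in\Gamma^*}\sum_{(j_1,j_2,\ldots)\in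 P_l}(M_{\pi,\pi_1})_{i,j_1}(M_{\pi_1,\pi_2})_{j_1,j_2}\cdots$. The behavior $\|\mathcal P\|=I(M^* )_{p_0,\epsilon}P+I(M^{\omega,l})_{p_0}$ is viewed as the pair $(I(M^* )_{p_0,\epsilon}P,I(M^{\omega,l})_{p_0})$ in the quemiring $S\times V$. *)

(* Defs.v *)
From HB Require Import structures.
From mathcomp Require Import all_boot all_order all_algebra.
Set Implicit Arguments. Unset Strict Implicit. Unset Printing Implicit Defensive.
Import GRing.Theory.
Local Open Scope ring_scope.

Record complete_pair (S : pzSemiRingType) (V : lSemiModType S) := CompletePair {
  csum : forall I : Type, (I -> S) -> S;
  vsum : forall I : Type, (I -> V) -> V;
  iprod : (nat -> S) -> V;
  csum_empty : forall I (f : I -> S), (I -> False) -> csum f = 0;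
  csum_single : forall I (f : I -> S) (i0 : I), (forall i, i = i0) -> csum f = f i0;
  csum_bool : forall f : bool -> S, csum f = f true + f false;
  csum_bij : forall I J (h : I -> J) (f : J -> S), bijective h ->
     csum f = csum (fun i => f (h i));
  csum_partition : forall I J (g : I -> J) (f : I -> S),
     csum f = csum (fun j : J => csum (fun x : {i : I | g i = j} => f (proj1_sig x)));
  csum_mull : forall I (f : I -> S) c, csum (fun i => c * f i) = c * csum f;
  csum_mulr : forall I (f : I -> S) c, csum (fun i => f i * c) = csum f * c;
  vsum_empty : forall I (f : I -> V), (I -> False) -> vsum f = 0;
  vsum_single : forall I (f : I -> V) (i0 : I), (forall i, i = i0) -> vsum f = f i0;
  vsum_bool : forall f : bool -> V, vsum f = f true + f false;
  vsum_bij : forall I J (h : I -> J) (f : J -> V), bijective h ->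
     vsum f = vsum (fun i => f (h i));
  vsum_partition : forall I J (g : I -> J) (f : I -> V),
     vsum f = vsum (fun j : J => vsum (fun x : {i : I | g i = j} => f (proj1_sig x)));
  vsum_scale : forall I (f : I -> V) s, vsum (fun i => s *: f i) = s *: vsum f;
  vsum_scaler : forall I (f : I -> S) v, vsum (fun i => f i *: v) = csum f *: v;
  iprod_shift : forall s : nat -> S, iprod s = s 0%N *: iprod (fun t => s t.+1);
  iprod_sum : forall (I : nat -> Type) (f : forall t, I t -> S),
     iprod (fun t => csum (f t)) =
     vsum (fun g : (forall t, I t) => iprod (fun t => f t (g t)));
  iprod_group : forall (s : nat -> S) (nn : nat -> nat), nn 0%N = 0%N ->
     (forall t, (nn t < nn t.+1)%N) ->
     iprod s = iprod (fun t => \prod_(nn t <= i < nn t.+1) s i)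
}.

Arguments complete_pair : clear implicits.

Section PDA.
Variables (S : pzSemiRingType) (V : lSemiModType S) (C : complete_pair S V).
Variables (Gamma : finType) (n : nat).

(* A Gamma^* x Gamma^* matrix with n x n blocks over S: M pi1 pi2 i j is the
   (i,j) entry of block M_{pi1,pi2}. *)
Definition pdmat := seq Gamma -> seq Gamma -> 'I_n -> 'I_n -> S.

Definition pushdown_matrix (M : pdmat) : Prop :=
  (forall p : Gamma, exists L : seq (seq Gamma),
      forall pi, pi \notin L -> forall i j, M [:: p] pi i j = 0) /\
  (forall pi1 pi2,
     (forall p pi pi', pi1 = p :: pi' -> pi2 = pi ++ pi' ->
         forall i j, M pi1 pi2 i j = M [:: p] pi i j) /\
     (~ (exists p pi pi', pi1 = p :: pi' /\ pi2 = pi ++ pi') ->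
         forall i j, M pi1 pi2 i j = 0)).

Definition omega_pda (S' : S -> Prop) (I : 'I_n -> S) (M : pdmat)
  (P : 'I_n -> S) (p0 : Gamma) (l : nat) : Prop :=
  (0 < n)%N /\ pushdown_matrix M /\
  (forall pi1 pi2 i j, S' (M pi1 pi2 i j)) /\
  (forall i, S' (I i)) /\ (forall i, S' (P i)) /\ (l <= n)%N.

Definition mmul (A B : pdmat) : pdmat := fun pi1 pi2 i j =>
  csum C (fun pi : seq Gamma => \sum_(k < n) A pi1 pi i k * B pi pi2 k j).

Definition mone : pdmat := fun pi1 pi2 i j =>
  if (pi1 == pi2) && (i == j) then 1 else 0.

Definition mpow (A : pdmat) (m : nat) : pdmat := iter m (fun X => mmul X A) mone.

Definition mstar (A : pdmat) : pdmat := fun pi1 pi2 i j =>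
  csum C (fun m : nat => mpow A m pi1 pi2 i j).

(* P_l : state sequences visiting states 1..l infinitely often (states are
   0-indexed here, so state j+1 <= l iff j < l) *)
Definition inf_often_le (l : nat) (js : nat -> 'I_n) : Prop :=
  forall N, exists t, (N <= t)%N /\ (js t < l)%N.

Definition momega (M : pdmat) (l : nat) (pi : seq Gamma) (i : 'I_n) : V :=
  vsum C (fun pis : nat -> seq Gamma =>
    vsum C (fun js : {js : nat -> 'I_n | inf_often_le l js} =>
      iprod C (fun t =>
        M (match t with 0 => pi | t'.+1 => pis t' end) (pis t)
          (match t with 0 => i | t'.+1 => proj1_sig js t' end)
          (proj1_sig js t)))).

Definition behavior_fin (I : 'I_n -> S) (M : pdmat) (P : 'I_n -> S) (p0 : Gamma) : S :=
  \sum_(m2 < n) (\sum_(m1 < n) I m1 * mstar M [:: p0] [::] m1 m2) * P m2.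

Definition behavior_inf (I : 'I_n -> S) (M : pdmat) (p0 : Gamma) (l : nat) : V :=
  \sum_(m < n) I m *: momega M l [:: p0] m.

Definition behavior (I : 'I_n -> S) (M : pdmat) (P : 'I_n -> S) (p0 : Gamma)
  (l : nat) : S * V := (behavior_fin I M P p0, behavior_inf I M p0 l).

(* [m1,p1,m2][m2,p2,m3]...[mk,pk,j] for ps = p1..pk, ms = m1..mk *)
Fixpoint chainS (tri : 'I_n -> Gamma -> 'I_n -> S) (ps : seq Gamma)
  (ms : seq 'I_n) (j : 'I_n) : S :=
  match ps, ms with
  | p :: ps', m :: ms' => tri m p (head j ms') * chainS tri ps' ms' j
  | _, _ => 1
  end.

(* [m1,p1,m2]...[m_{j-1},p_{j-1},m_j][m_j,p_j] for ms = m1..mj *)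
Fixpoint chainV (tri : 'I_n -> Gamma -> 'I_n -> S) (br : 'I_n -> Gamma -> V)
  (ps : seq Gamma) (ms : seq 'I_n) : V :=
  match ps, ms with
  | p :: ps', m :: ms' =>
      match ms' with
      | [::] => br m p
      | m' :: _ => tri m p m' *: chainV tri br ps' ms'
      end
  | _, _ => 0
  end.

End PDA.

(* Main.v *)
Require Import Defs.
From HB Require Import structures.
From mathcomp Require Import all_boot all_order all_algebra.
From Stdlib Require Import ProofIrrelevance ClassicalEpsilon FunctionalExtensionality.
Import GRing.Theory.
Local Open Scope ring_scope.
Set Implicit Arguments. Unset Strict Implicit.

Lemma sigE (A : Type) (P : A -> Prop) (x y : {a | P a}) :
  proj1_sig x = proj1_sig y -> x = y.
Proof.
case: x => a pa; case: y => b pb /= E; subst b; f_equal; apply: proof_irrelevance.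
Qed.

Section GenSum.
Variable X : nmodType.
Variable sm : forall {I : Type}, (I -> X) -> X.
Hypothesis sm0 : forall I : Type, sm (fun _ : I => 0) = 0.
Hypothesis sm_single : forall I (f : I -> X) (i0 : I), (forall i, i = i0) -> sm f = f i0.
Hypothesis sm_bool : forall f : bool -> X, sm f = f true + f false.
Hypothesis sm_bij : forall I J (h : I -> J) (f : J -> X), bijective h ->
     sm f = sm (fun i => f (h i)).
Hypothesis sm_partition : forall I J (g : I -> J) (f : I -> X),
     sm f = sm (fun j : J => sm (fun x : {i : I | g i = j} => f (proj1_sig x))).

Lemma sm_ext I (f g : I -> X) : (forall i, f i = g i) -> sm f = sm g.
Proof. by move=> H; rewrite (functional_extensionality f g H). Qed.

Lemma sm_zero I (f : I -> X) : (forall i, f i = 0) -> sm f = 0.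
Proof. by move=> H; rewrite (sm_ext H) sm0. Qed.

Lemma sm_reindex (A B : Type) (f : A -> X) (g : B -> X) (h : A -> B) (h' : B -> A) :
  (forall a, f a != 0 -> h' (h a) = a /\ g (h a) = f a) ->
  (forall b, g b != 0 -> h (h' b) = b /\ f (h' b) = g b) -> sm f = sm g.
Proof.
move=> Ha Hb.
rewrite (sm_partition (fun a => f a != 0)) (sm_partition (fun b => g b != 0)).
rewrite !sm_bool.
rewrite [X in _ + X]sm_zero; last first.
  by case=> a /= /negbFE /eqP.
rewrite [X in _ = _ + X]sm_zero; last first.
  by case=> a /= /negbFE /eqP.
rewrite !addr0.
have hP : forall x : {a | (f a != 0) = true}, (g (h (proj1_sig x)) != 0) = true.
  by case=> a /= Pa; have [_ ->] := Ha a Pa.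
have hP' : forall y : {b | (g b != 0) = true}, (f (h' (proj1_sig y)) != 0) = true.
  by case=> b /= Pb; have [_ ->] := Hb b Pb.
pose H := fun x => exist (fun b => (g b != 0) = true) _ (hP x).
pose H' := fun y => exist (fun a => (f a != 0) = true) _ (hP' y).
rewrite (@sm_bij _ _ H); last first.
  exists H'.
    by case=> a Pa; apply: sigE => /=; have [-> _] := Ha a Pa.
  by case=> b Pb; apply: sigE => /=; have [-> _] := Hb b Pb.
apply: sm_ext => -[a Pa] /=.
by have [_ ->] := Ha a Pa.
Qed.

Lemma ft : false = true -> False. Proof. by []. Qed.

Definition isl A B (x : A + B) : bool := if x is inl _ then true else false.

Definition getl A B (x : {x : A + B | isl x = true}) : A :=
  match x with
  | exist (inl a) _ => a
  | exist (inr b) p => False_rect A (ft p)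
  end.
Definition getr A B (x : {x : A + B | isl x = false}) : B :=
  match x with
  | exist (inr b) _ => b
  | exist (inl a) p => False_rect B (ft (esym p))
  end.

Lemma sm_sum A B (f : A + B -> X) :
  sm f = sm (fun a => f (inl a)) + sm (fun b => f (inr b)).
Proof.
rewrite (sm_partition (@isl A B)) sm_bool.
congr (_ + _).
  pose H := fun a : A => exist (fun x : A + B => isl x = true) (inl a) erefl.
  rewrite (@sm_bij _ _ H) //.
  exists (@getl A B) => //.
  by case=> -[a|b] p; apply: sigE.
pose H := fun b : B => exist (fun x : A + B => isl x = false) (inr b) erefl.
rewrite (@sm_bij _ _ H) //.
exists (@getr A B) => //.
by case=> -[a|b] p; apply: sigE.
Qed.

Lemma sm_pair A B (f : A * B -> X) :
  sm f = sm (fun a => sm (fun b => f (a, b))).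
Proof.
rewrite (sm_partition fst); apply: sm_ext => a.
pose H := fun b : B => exist (fun x : A * B => x.1 = a) (a, b) erefl.
rewrite (@sm_bij _ _ H) //.
exists (fun x => (proj1_sig x).2) => //.
by case=> -[a' b] /= p; apply: sigE => /=; rewrite p.
Qed.

Lemma sm_swap A B (f : A -> B -> X) :
  sm (fun a => sm (fun b => f a b)) = sm (fun b => sm (fun a => f a b)).
Proof.
rewrite -(sm_pair (fun p : A * B => f p.1 p.2)) -(sm_pair (fun p : B * A => f p.2 p.1)).
rewrite (@sm_bij _ _ (fun p : A * B => (p.2, p.1))) //.
by exists (fun p : B * A => (p.2, p.1)) => -[].
Qed.

Lemma smD I (f g : I -> X) : sm (fun i => f i + g i) = sm f + sm g.
Proof.
transitivity (sm (fun i => sm (fun b : bool => if b then f i else g i))).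
  by apply: sm_ext => i; rewrite sm_bool.
by rewrite sm_swap sm_bool.
Qed.

Lemma sm_unit (f : unit -> X) : sm f = f tt.
Proof. by apply: sm_single => -[]. Qed.

Lemma sm_ordS k (f : 'I_k.+1 -> X) :
  sm f = f ord_max + sm (fun i : 'I_k => f (widen_ord (leqnSn k) i)).
Proof.
pose H := fun x : unit + 'I_k => match x with inl _ => ord_max | inr i => widen_ord (leqnSn k) i end.
rewrite (@sm_bij _ _ H) ?sm_sum ?sm_unit //.
exists (fun i : 'I_k.+1 => match unlift ord_max i with Some j => inr j | None => inl tt end).
  case=> [[]|i] /=; first by rewrite unlift_none.
  have -> : widen_ord (leqnSn k) i = lift ord_max i by apply: val_inj; rewrite /= /bump leqNgt ltn_ord.
  by rewrite liftK.
move=> i; case: unliftP => [j ->|->] //=.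
by apply: val_inj; rewrite /= /bump leqNgt ltn_ord.
Qed.

Lemma sm_ord k (f : 'I_k -> X) : sm f = \sum_(i < k) f i.
Proof.
elim: k f => [|k IH] f.
  by rewrite big_ord0; apply: sm_zero => -[].
rewrite sm_ordS IH big_ord_recr /= addrC; congr (_ + _).
Qed.

Lemma sm_fin (T : finType) (f : T -> X) : sm f = \sum_(x : T) f x.
Proof.
rewrite (@sm_bij _ _ (@enum_val T (pred_of_simpl predT))); last first.
  by exists enum_rank; [exact: enum_valK | exact: enum_rankK].
rewrite sm_ord; rewrite (reindex (@enum_val T (pred_of_simpl predT))) //.
by exists enum_rank => x _; [exact: enum_valK | exact: enum_rankK].
Qed.

Lemma sm_big (T : finType) A (F : T -> A -> X) :
  sm (fun a => \sum_(t : T) F t a) = \sum_(t : T) sm (F t).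
Proof.
transitivity (sm (fun a => sm (fun t => F t a))).
  by apply: sm_ext => a; rewrite sm_fin.
by rewrite sm_swap sm_fin.
Qed.

Lemma sm_nat (f : nat -> X) : sm f = f 0%N + sm (fun k => f k.+1).
Proof.
pose H := fun x : unit + nat => match x with inl _ => 0%N | inr k => k.+1 end.
rewrite (@sm_bij _ _ H) ?sm_sum ?sm_unit //.
exists (fun k => match k with 0%N => inl tt | k'.+1 => inr k' end).
  by case=> [[]|k].
by case.
Qed.

Lemma sm_seq (T : finType) (f : seq T -> X) :
  sm f = sm (fun k => \sum_(t : k.-tuple T) f t).
Proof.
rewrite (sm_partition size); apply: sm_ext => k.
rewrite -sm_fin.
pose H := fun t : k.-tuple T => exist (fun L : seq T => size L = k) (tval t) (size_tuple t).
rewrite (@sm_bij _ _ H) //.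
exists (fun x : {L : seq T | size L = k} => Tuple (introT eqP (proj2_sig x))).
  by move=> t; apply: val_inj.
by case=> L p; apply: sigE.
Qed.

End GenSum.

Lemma catsI' (T : Type) (y z r : seq T) : y ++ r = z ++ r -> y = z.
Proof.
move=> E; have Hs : size y = size z by move/(f_equal size): E; rewrite !size_cat => /addIn.
by move/(f_equal (take (size y))): E; rewrite take_size_cat // take_size_cat.
Qed.

Section PDA.
Variables (S : pzSemiRingType) (V : lSemiModType S) (C : complete_pair S V).
Variables (Gamma : finType) (n : nat) (M : pdmat S Gamma n).
Hypothesis HM : pushdown_matrix M.

Lemma cs_ext I (f g : I -> S) : (forall i, f i = g i) -> csum C f = csum C g.
Proof. by move=> H; rewrite (functional_extensionality f g H). Qed.
Lemma vs_ext I (f g : I -> V) : (forall i, f i = g i) -> vsum C f = vsum C g.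
Proof. by move=> H; rewrite (functional_extensionality f g H). Qed.

Lemma cs0 I : csum C (fun _ : I => 0) = 0.
Proof. by rewrite -[RHS](mul0r (csum C (fun _ : I => 0 : S))) -csum_mull; apply: cs_ext => i; rewrite mul0r. Qed.
Lemma vs0 I : vsum C (fun _ : I => 0 : V) = 0.
Proof. by rewrite -[RHS](scale0r (vsum C (fun _ : I => 0 : V))) -vsum_scale; apply: vs_ext => i; rewrite scale0r. Qed.

Ltac csh := first [exact: cs0 | exact: (csum_single C) | exact: (csum_bool C) | exact: (csum_bij C) | exact: (csum_partition C)
  | exact: vs0 | exact: (vsum_single C) | exact: (vsum_bool C) | exact: (vsum_bij C) | exact: (vsum_partition C)].


Lemma cs_zero I (f : I -> S) : (forall i, f i = 0) -> csum C f = 0.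
Proof. by move=> H; apply: sm_zero => //; csh. Qed.
Lemma vs_zero I (f : I -> V) : (forall i, f i = 0) -> vsum C f = 0.
Proof. by move=> H; apply: sm_zero => //; csh. Qed.
Lemma cs_reindex (A B : Type) (f : A -> S) (g : B -> S) (h : A -> B) (h' : B -> A) :
  (forall a, f a != 0 -> h' (h a) = a /\ g (h a) = f a) ->
  (forall b, g b != 0 -> h (h' b) = b /\ f (h' b) = g b) -> csum C f = csum C g.
Proof. by move=> H1 H2; apply: (@sm_reindex _ (fun I => @csum _ _ C I) _ _ _ _ _ _ _ _ h h') => //; csh. Qed.
Lemma vs_reindex (A B : Type) (f : A -> V) (g : B -> V) (h : A -> B) (h' : B -> A) :
  (forall a, f a != 0 -> h' (h a) = a /\ g (h a) = f a) ->
  (forall b, g b != 0 -> h (h' b) = b /\ f (h' b) = g b) -> vsum C f = vsum C g.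
Proof. by move=> H1 H2; apply: (@sm_reindex _ (fun I => @vsum _ _ C I) _ _ _ _ _ _ _ _ h h') => //; csh. Qed.
Lemma cs_sum A B (f : A + B -> S) :
  csum C f = csum C (fun a => f (inl a)) + csum C (fun b => f (inr b)).
Proof. by apply: sm_sum; csh. Qed.
Lemma vs_sum A B (f : A + B -> V) :
  vsum C f = vsum C (fun a => f (inl a)) + vsum C (fun b => f (inr b)).
Proof. by apply: sm_sum; csh. Qed.
Lemma cs_pair A B (f : A * B -> S) : csum C f = csum C (fun a => csum C (fun b => f (a, b))).
Proof. by apply: sm_pair; csh. Qed.
Lemma vs_pair A B (f : A * B -> V) : vsum C f = vsum C (fun a => vsum C (fun b => f (a, b))).
Proof. by apply: sm_pair; csh. Qed.
Lemma cs_swap A B (f : A -> B -> S) :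
  csum C (fun a => csum C (fun b => f a b)) = csum C (fun b => csum C (fun a => f a b)).
Proof. by apply: sm_swap; csh. Qed.
Lemma vs_swap A B (f : A -> B -> V) :
  vsum C (fun a => vsum C (fun b => f a b)) = vsum C (fun b => vsum C (fun a => f a b)).
Proof. by apply: sm_swap; csh. Qed.
Lemma csD I (f g : I -> S) : csum C (fun i => f i + g i) = csum C f + csum C g.
Proof. by apply: smD; csh. Qed.
Lemma vsD I (f g : I -> V) : vsum C (fun i => f i + g i) = vsum C f + vsum C g.
Proof. by apply: smD; csh. Qed.
Lemma cs_unit (f : unit -> S) : csum C f = f tt.
Proof. by apply: sm_unit; csh. Qed.
Lemma cs_fin (T : finType) (f : T -> S) : csum C f = \sum_(x : T) f x.
Proof. by apply: sm_fin; csh. Qed.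
Lemma vs_fin (T : finType) (f : T -> V) : vsum C f = \sum_(x : T) f x.
Proof. by apply: sm_fin; csh. Qed.
Lemma cs_big (T : finType) A (F : T -> A -> S) :
  csum C (fun a => \sum_(t : T) F t a) = \sum_(t : T) csum C (F t).
Proof. by apply: sm_big; csh. Qed.
Lemma vs_big (T : finType) A (F : T -> A -> V) :
  vsum C (fun a => \sum_(t : T) F t a) = \sum_(t : T) vsum C (F t).
Proof. by apply: sm_big; csh. Qed.
Lemma cs_nat (f : nat -> S) : csum C f = f 0%N + csum C (fun k => f k.+1).
Proof. by apply: sm_nat; csh. Qed.
Lemma vs_nat (f : nat -> V) : vsum C f = f 0%N + vsum C (fun k => f k.+1).
Proof. by apply: sm_nat; csh. Qed.
Lemma cs_seq (T : finType) (f : seq T -> S) :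
  csum C f = csum C (fun k => \sum_(t : k.-tuple T) f t).
Proof. by apply: sm_seq; csh. Qed.
Lemma vs_seq (T : finType) (f : seq T -> V) :
  vsum C f = vsum C (fun k => \sum_(t : k.-tuple T) f t).
Proof. by apply: sm_seq; csh. Qed.

Lemma M_nil pi i j : M [::] pi i j = 0.
Proof. case: HM => _ H; apply: (proj2 (H [::] pi)); by case=> p [pi0 [pi' []]]. Qed.

Lemma M_app x y r i j : x != [::] -> M (x ++ r) (y ++ r) i j = M x y i j.
Proof.
case: x => [//|p x'] _; case: HM => _ H.
case: (excluded_middle_informative (exists pi, y = pi ++ x')) => [[pi ->]|NE].
  rewrite -catA (proj1 (H _ _) p pi (x' ++ r)) //.
  by rewrite (proj1 (H _ _) p pi x').
rewrite (proj2 (H _ _)); last first.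
  case=> p' [pi [pi' [[_ <-] E]]]; apply: NE; exists pi.
  by apply: (@catsI' _ _ _ r); rewrite -catA.
rewrite (proj2 (H _ _)) //.
by case=> p' [pi [pi' [[_ <-] E]]]; apply: NE; exists pi.
Qed.

Lemma M_struct x r d i j : M (x ++ r) d i j != 0 -> x != [::] -> exists y, d = y ++ r.
Proof.
move=> Hnz; case: x Hnz => [//|p x'] Hnz _; case: HM => _ H.
case: (excluded_middle_informative (exists p0 pi pi', p :: x' ++ r = p0 :: pi' /\ d = pi ++ pi')).
  by case=> p0 [pi [pi' [[_ <-] ->]]]; exists (pi ++ x'); rewrite catA.
by move=> NE; move: Hnz; rewrite (proj2 (H _ _)) ?eqxx.
Qed.

Definition config := (seq Gamma * 'I_n)%type.
Definition stepw (c d : config) : S := M c.1 d.1 c.2 d.2.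
Fixpoint wt (c : config) (L : seq config) : S :=
  if L is d :: L' then stepw c d * wt d L' else 1.
Definition PS (c c' : config) : S :=
  csum C (fun L : seq config => if last c L == c' then wt c L else 0).

Lemma wt_cat c L1 L2 : wt c (L1 ++ L2) = wt c L1 * wt (last c L1) L2.
Proof. by elim: L1 c => [|d L1 IH] c /=; rewrite ?mul1r // IH mulrA. Qed.

Lemma size_rcons_m m (L : {L : seq config | size L = m}) d : size (rcons (sval L) d) = m.+1.
Proof. by rewrite size_rcons (proj2_sig L). Qed.
Lemma size_take_m m (x : {L : seq config | size L = m.+1}) : size (take m (sval x)) = m.
Proof. by rewrite size_take (proj2_sig x) ltnSn. Qed.

Lemma mpow_PS m (c c' : config) :
  mpow C M m c.1 c'.1 c.2 c'.2 =
  csum C (fun x : {L : seq config | size L = m} =>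
     if last c (proj1_sig x) == c' then wt c (proj1_sig x) else 0).
Proof.
elim: m c' => [|m IH] c'.
  rewrite (csum_single C _ (i0 := exist (fun L : seq config => size L = 0%N) [::] erefl)); last first.
    by case=> -[|//] p; apply: sigE.
  by rewrite /= /mone; case: c c' => [pi i] [pi' i'] /=; rewrite xpair_eqE.
rewrite /mpow iterS -/(mpow C M m) /mmul.
transitivity (csum C (fun p : seq Gamma * ('I_n * {L : seq config | size L = m}) =>
   (if last c (sval p.2.2) == (p.1, p.2.1) then wt c (sval p.2.2) else 0) * M p.1 c'.1 p.2.1 c'.2)).
  rewrite cs_pair; apply: cs_ext => pi; rewrite cs_pair cs_fin; apply: eq_bigr => k _.
  by rewrite (IH (pi,k)) -csum_mulr.
apply: (cs_reindex
  (h := fun p : seq Gamma * ('I_n * {L : seq config | size L = m}) =>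
          exist (fun L => size L = m.+1) (rcons (sval p.2.2) c') (size_rcons_m p.2.2 c'))
  (h' := fun x => ((last c (take m (sval x))).1, ((last c (take m (sval x))).2,
                    exist (fun L => size L = m) (take m (sval x)) (size_take_m x))))).
  case=> pi [k [L HL]] /=; case: (last c L =P (pi, k)) => [E|]; last by rewrite mul0r eqxx.
  move=> _; split.
    have E1 : take m (rcons L c') = L by rewrite -cats1 take_size_cat.
    match goal with |- context [exist ?P (take m (rcons L c')) ?pf] =>
      have -> : exist P (take m (rcons L c')) pf = exist P L HL by apply: sigE end.
    by rewrite E1 E.
  by rewrite last_rcons eqxx -cats1 wt_cat E /= mulr1.
case=> L HL /=; case: (last c L =P c') => [E _|]; last by rewrite eqxx.
move: E HL; case/lastP: L => [|L d] /=; first by move=> _ .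
rewrite last_rcons => -> HL.
have HLm : size L = m by move: HL; rewrite size_rcons => -[].
have E1 : take m (rcons L c') = L by rewrite -cats1 take_size_cat.
split; first by apply: sigE => /=; rewrite E1.
by rewrite /= E1 -surjective_pairing eqxx -cats1 wt_cat /= mulr1.
Qed.

Lemma mstar_PS (c c' : config) : mstar C M c.1 c'.1 c.2 c'.2 = PS c c'.
Proof.
rewrite /mstar /PS (csum_partition C size); apply: cs_ext => m; exact: mpow_PS.
Qed.

Lemma PS_first (c c' : config) :
  PS c c' = (if c == c' then 1 else 0) + csum C (fun d : config => stepw c d * PS d c').
Proof.
rewrite /PS.
rewrite (cs_reindex
  (g := fun x : unit + config * seq config => match x with
         | inl _ => if c == c' then 1 else 0
         | inr (d, L) => if last d L == c' then stepw c d * wt d L else 0 end)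
  (h := fun L : seq config => match L with [::] => inl tt | d :: L' => inr (d, L') end)
  (h' := fun x => match x with inl _ => [::] | inr (d, L) => d :: L end)); last 2 first.
- by case.
- by case=> [[]|[d L]].
rewrite cs_sum cs_unit; congr (_ + _).
rewrite cs_pair; apply: cs_ext => d; rewrite -csum_mull; apply: cs_ext => L.
by case: ifP; rewrite ?mulr0.
Qed.

Lemma stepw_nil m d : stepw ([::], m) d = 0.
Proof. exact: M_nil. Qed.

Lemma PS_nil (m j : 'I_n) : PS ([::], m) ([::], j) = if m == j then 1 else 0.
Proof.
rewrite PS_first (@cs_zero _ (fun d => _)); last by move=> d; rewrite stepw_nil mul0r.
by rewrite addr0 xpair_eqE eqxx.
Qed.

Definition app (r : seq Gamma) (d : config) : config := (d.1 ++ r, d.2).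
Definition strip (r : seq Gamma) (d : config) : config := (take (size d.1 - size r) d.1, d.2).
Definition hit (r : seq Gamma) (d : config) : bool := d.1 == r.
Fixpoint stepsnz (c : config) (L : seq config) : bool :=
  if L is d :: L' then (stepw c d != 0) && stepsnz d L' else true.

Lemma strip_app (r : seq Gamma) : cancel (app r) (strip r).
Proof. by case=> s i; rewrite /strip /app /= size_cat addnK take_size_cat. Qed.

Lemma app_strip (r : seq Gamma) (d : config) : suffix r d.1 -> app r (strip r d) = d.
Proof. by case: d => s i /= /suffixP [y ->]; rewrite (strip_app r (y, i)). Qed.

Lemma suffix_app (r x : seq Gamma) : suffix r (x ++ r).
Proof. by apply/suffixP; exists x. Qed.

Lemma app_ne (r x : seq Gamma) : (x ++ r != r) = (x != [::]).
Proof.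
case: x => [|p x] /=; first by rewrite eqxx.
apply/negP => /eqP E; have := f_equal size E; rewrite /= size_cat => /eqP.
by rewrite -addSn -{2}(add0n (size r)) eqn_add2r.
Qed.

Lemma strip_ne (r : seq Gamma) (d : config) : suffix r d.1 -> d.1 != r -> (strip r d).1 != [::].
Proof.
case: d => s i /= /suffixP [y ->].
rewrite /strip /= size_cat addnK take_size_cat //.
by move=> H; apply: contra H => /eqP ->.
Qed.

Lemma wt_strip (r : seq Gamma) (c : config) L : all (fun d => suffix r d.1) (c :: L) ->
  all (fun e => e.1 != r) (belast c L) -> wt c L = wt (strip r c) (map (strip r) L).
Proof.
elim: L c => [|d L IH] c //= /and3P [sc sd sL] /andP [nc nL].
rewrite [RHS]/= -(IH d) ?sd ?sL //; last by rewrite /= sd.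
have -> // : stepw c d = stepw (strip r c) (strip r d).
rewrite /stepw -{1}(app_strip sc) -{1}(app_strip sd) /= M_app //.
exact: strip_ne.
Qed.

Lemma wt_app (r : seq Gamma) (c : config) L : all (fun e => e.1 != [::]) (belast c L) ->
  wt (app r c) (map (app r) L) = wt c L.
Proof.
move=> H; rewrite (@wt_strip r).
- by rewrite strip_app (mapK (@strip_app r)).
- by rewrite /= suffix_app /= all_map; apply/allP => d _ /=; apply: suffix_app.
by rewrite belast_map all_map; apply: sub_all H => e /=; rewrite app_ne.
Qed.

Lemma wt_nz (c : config) L : wt c L != 0 -> stepsnz c L.
Proof.
elim: L c => [|d L IH] c //= H; apply/andP; split.
  by apply: contraNneq H => ->; rewrite mul0r.
by apply: IH; apply: contraNneq H => ->; rewrite mulr0.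
Qed.

Lemma stepw_ne (c d : config) : stepw c d != 0 -> c.1 != [::].
Proof. by case: c => [[|p s] i] //; rewrite stepw_nil eqxx. Qed.

Lemma stepsnz_ne (c : config) L : stepsnz c L -> all (fun e => e.1 != [::]) (belast c L).
Proof.
elim: L c => [|d L IH] c /=; first by [].
case/andP=> H1 H2; rewrite (stepw_ne H1) /=; exact: IH.
Qed.

Lemma struct_pref (r : seq Gamma) (c : config) L : suffix r c.1 -> c.1 != r -> stepsnz c L ->
  all (fun d => suffix r d.1) (take (find (hit r) L).+1 L).
Proof.
elim: L c => [|d L IH] c //= sc nc /andP [H1 H2].
have sd : suffix r d.1.
  move/suffixP: sc => [y Ey]; move: H1 nc; rewrite /stepw Ey app_ne => H1 ny.
  by have [y' ->] := M_struct H1 ny; apply: suffix_app.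
rewrite sd /=; case hd: (hit r d); first by rewrite take0.
by apply: (IH d) => //; move: hd; rewrite /hit => ->.
Qed.

Lemma take_find_all (T : Type) (p : pred T) (L : seq T) :
  all (predC p) (take (find p L) L).
Proof. by elim: L => [|x L IH] //=; case: ifP => //= ->. Qed.

Lemma PS_split (a : Gamma) (r : seq Gamma) (i j : 'I_n) :
  PS (a :: r, i) ([::], j) = \sum_(m < n) PS ([:: a], i) ([::], m) * PS (r, m) ([::], j).
Proof.
pose c0 : config := (a :: r, i).
transitivity (csum C (fun p : 'I_n * (seq config * seq config) =>
  (if last ([:: a], i) p.2.1 == ([::], p.1) then wt ([:: a], i) p.2.1 else 0) *
  (if last (r, p.1) p.2.2 == ([::], j) then wt (r, p.1) p.2.2 else 0))); last first.
  rewrite cs_pair cs_fin; apply: eq_bigr => m _.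
  rewrite cs_pair /PS -csum_mulr; apply: cs_ext => L1; by rewrite -csum_mull.
rewrite /PS.
apply: (cs_reindex
  (h := fun L => let t := find (hit r) L in
         ((nth c0 L t).2, (map (strip r) (take t.+1 L), drop t.+1 L)))
  (h' := fun p => map (app r) p.2.1 ++ p.2.2)).
- move=> L; case: (last (a :: r, i) L =P ([::], j)) => [El|]; last by rewrite eqxx.
  move=> Hw; have sn := wt_nz Hw.
  have sc0 : suffix r c0.1 by exact: (suffix_app r [:: a]).
  have nc0 : c0.1 != r by exact: (app_ne r [:: a]).
  have sufT := struct_pref sc0 nc0 sn.
  have hasL : has (hit r) L.
    apply/negPn/negP => nh; move: sufT.
    rewrite take_oversize; last by move: nh; rewrite has_find -leqNgt => /leqW.
    case: L El {Hw sn nh} (nh) => [|d L] El nh; first by move: El => /(f_equal fst).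
    move=> /allP sL; have := mem_last c0 (d :: L); rewrite El inE.
    case/orP=> [/eqP/(f_equal fst)//|lL].
    have := sL _ lL => /= /suffixP [y /esym /eqP]; rewrite -size_eq0 size_cat addn_eq0 !size_eq0 => /andP [_ /eqP Er].
    by move: nh; apply/negP/negPn/hasP; exists ([::], j) => //; rewrite /hit Er.
  set t := find (hit r) L.
  have tL : (t < size L)%N by rewrite -has_find.
  set e := nth c0 L t.
  have he : e.1 = r by apply/eqP; exact: (nth_find c0 hasL).
  have Tdef : take t.+1 L = rcons (take t L) e := take_nth c0 tL.
  have lT : last c0 (take t.+1 L) = e by rewrite Tdef last_rcons.
  have se : strip r e = ([::], e.2) by rewrite /strip he subnn take0.
  have sc : strip r c0 = ([:: a], i) by rewrite /strip /= subSnn /= take0.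
  split.
    by rewrite -map_comp map_id_in ?cat_take_drop // => d /(allP sufT) sd /=; apply: app_strip.
  rewrite /= Tdef map_rcons last_rcons se eqxx -se -map_rcons -Tdef -sc -wt_strip; last first.
  + rewrite Tdef belast_rcons /= nc0 /=.
    by apply: sub_all (take_find_all (hit r) L) => d /=; rewrite /hit.
  + by rewrite /= sc0.
  have -> : (r, e.2) = e by rewrite -he -surjective_pairing.
  rewrite -lT -last_cat cat_take_drop El eqxx.
  by rewrite -wt_cat cat_take_drop.
- case=> m [L1 L2] /=.
  case: (last ([:: a], i) L1 =P ([::], m)) => [E1|]; last by rewrite mul0r eqxx.
  case: (last (r, m) L2 =P ([::], j)) => [E2|]; last by rewrite mulr0 eqxx.
  move=> H.
  have H1 : wt ([:: a], i) L1 != 0 by apply: contraNneq H => ->; rewrite mul0r.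
  case/lastP: L1 E1 H1 H => [|L1' e]; first by move=> /(f_equal fst).
  rewrite last_rcons => Ee H1 H.
  have ne := stepsnz_ne (wt_nz H1); rewrite belast_rcons /= in ne.
  have nh : has (hit r) (map (app r) L1') = false.
    rewrite has_map; apply/negbTE/hasPn => d dL /=; rewrite /hit /app /= app_ne.
    by apply: (allP ne).
  have ft : find (hit r) (map (app r) (rcons L1' e) ++ L2) = size L1'.
    by rewrite map_rcons -cats1 -catA find_cat nh size_map /= /hit Ee eqxx addn0.
  have sz : (size L1').+1 = size (map (app r) (rcons L1' e)) by rewrite size_map size_rcons.
  rewrite ft sz take_size_cat // drop_size_cat // (mapK (@strip_app r)).
  split.
    rewrite nth_cat -sz ltnSn map_rcons nth_rcons size_map ltnn eqxx Ee //.
  rewrite last_cat.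
  have -> : last (a :: r, i) (map (app r) (rcons L1' e)) = (r, m).
    by rewrite (last_map (app r) _ ([:: a], i)) last_rcons Ee.
  rewrite E2 eqxx wt_cat.
  have -> : last (a :: r, i) (map (app r) (rcons L1' e)) = (r, m).
    by rewrite (last_map (app r) _ ([:: a], i)) last_rcons Ee.
  rewrite (@wt_app r ([:: a], i)) //.
  by rewrite belast_rcons.
Qed.

Lemma cs_tuple0 (T : finType) (G : 0.-tuple T -> S) : \sum_(t : 0.-tuple T) G t = G [tuple].
Proof. by rewrite -cs_fin (csum_single C _ (i0 := [tuple])) // => t; rewrite tuple0. Qed.
Lemma vs_tuple0 (T : finType) (G : 0.-tuple T -> V) : \sum_(t : 0.-tuple T) G t = G [tuple].
Proof. by rewrite -vs_fin (vsum_single C _ (i0 := [tuple])) // => t; rewrite tuple0. Qed.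

Lemma cs_tupleS (T : finType) k (G : k.+1.-tuple T -> S) :
  \sum_(t : k.+1.-tuple T) G t = \sum_(x : T) \sum_(t : k.-tuple T) G [tuple of x :: t].
Proof.
rewrite -[LHS]cs_fin.
under eq_bigr do rewrite -cs_fin.
rewrite -cs_fin -(cs_pair (fun p : T * k.-tuple T => G [tuple of p.1 :: p.2])).
rewrite (csum_bij C (h := fun p : T * k.-tuple T => [tuple of p.1 :: p.2])) //.
exists (fun t : k.+1.-tuple T => (thead t, [tuple of behead t])).
  by case=> x t /=; congr (_, _); apply: val_inj.
by move=> t; case/tupleP: t => x t; apply: val_inj.
Qed.

Lemma vs_tupleS (T : finType) k (G : k.+1.-tuple T -> V) :
  \sum_(t : k.+1.-tuple T) G t = \sum_(x : T) \sum_(t : k.-tuple T) G [tuple of x :: t].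
Proof.
rewrite -[LHS]vs_fin.
under eq_bigr do rewrite -vs_fin.
rewrite -vs_fin -(vs_pair (fun p : T * k.-tuple T => G [tuple of p.1 :: p.2])).
rewrite (vsum_bij C (h := fun p : T * k.-tuple T => [tuple of p.1 :: p.2])) //.
exists (fun t : k.+1.-tuple T => (thead t, [tuple of behead t])).
  by case=> x t /=; congr (_, _); apply: val_inj.
by move=> t; case/tupleP: t => x t; apply: val_inj.
Qed.

Definition triS (i : 'I_n) (p : Gamma) (j : 'I_n) : S := mstar C M [:: p] [::] i j.

Lemma triS_PS i p j : triS i p j = PS ([:: p], i) ([::], j).
Proof. exact: (mstar_PS ([:: p], i) ([::], j)). Qed.

Lemma chainS_sum (j : 'I_n) k (ps : k.-tuple Gamma) (F : 'I_n -> S) :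
  \sum_(ms : k.-tuple 'I_n) F (head j ms) * chainS triS ps ms j =
  \sum_(m < n) F m * PS (tval ps, m) ([::], j).
Proof.
elim: k ps F => [|k IH] ps F.
  rewrite cs_tuple0 (size0nil (size_tuple ps)) /= mulr1 (bigD1 j) //= PS_nil eqxx mulr1 big1 ?addr0 //.
  by move=> m /negbTE; rewrite PS_nil => ->; rewrite mulr0.
case/tupleP: ps => a ps; rewrite cs_tupleS; apply: eq_bigr => m1 _ /=.
rewrite -mulr_sumr (IH ps (triS m1 a)) PS_split.
by apply: congr1; apply: eq_bigr => m _; rewrite triS_PS.
Qed.

Lemma eq2 p i j : triS i p j = csum C (fun k => \sum_(ps : k.-tuple Gamma)
  \sum_(ms : k.-tuple 'I_n) M [:: p] ps i (head j ms) * chainS triS ps ms j).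
Proof.
rewrite triS_PS PS_first.
have -> : (([:: p], i) == ([::], j) :> config) = false by rewrite xpair_eqE.
rewrite add0r cs_pair cs_seq; apply: cs_ext => k; apply: eq_bigr => ps _.
by rewrite chainS_sum cs_fin.
Qed.

Variable l : nat.

Definition infc (rho : nat -> config) : Prop := inf_often_le l (fun t => (rho t).2).
Definition stepf (c : config) (rho : nat -> config) (t : nat) : S :=
  stepw (if t is t'.+1 then rho t' else c) (rho t).
Definition Om (c : config) : V :=
  vsum C (fun x : {rho : nat -> config | infc rho} => iprod C (stepf c (proj1_sig x))).

Lemma infc_off (rho sig : nat -> config) k :
  (forall t, (rho (k + t)%N).2 = (sig t).2) -> infc rho <-> infc sig.
Proof.
move=> E; split=> H N.
  have [t [Ht Hl]] := H (k + N)%N.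
  exists (t - k)%N; split; first by rewrite leq_subRL // (leq_trans (leq_addr N k) Ht).
  by rewrite -E subnKC // (leq_trans (leq_addr N k) Ht).
have [t [Ht Hl]] := H N.
exists (k + t)%N; split; first by rewrite (leq_trans Ht) // leq_addl.
by rewrite E.
Qed.

Lemma iprod_prefix (s : nat -> S) N :
  iprod C s = (\prod_(t < N) s t) *: iprod C (fun t => s (N + t)%N).
Proof.
elim: N => [|N IH].
  by rewrite big_ord0 scale1r; congr (iprod C _); apply: functional_extensionality => t.
rewrite IH (iprod_shift C (fun t => s (N + t)%N)) scalerA big_ord_recr /= addn0.
by congr (_ *: iprod C _); apply: functional_extensionality => t; rewrite addnS addSn.
Qed.

Lemma iprod_zero (s : nat -> S) t : s t = 0 -> iprod C s = 0.
Proof.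
by move=> H; rewrite (iprod_prefix s t.+1) big_ord_recr /= H mulr0 scale0r.
Qed.

Lemma last_mkseq (c : config) (rho : nat -> config) N :
  last c (mkseq rho N) = if N is N'.+1 then rho N' else c.
Proof. by case: N => [|N] //; rewrite mkseqS last_rcons. Qed.

Lemma prod_stepf c rho N : \prod_(t < N) stepf c rho t = wt c (mkseq rho N).
Proof.
elim: N => [|N IH]; first by rewrite big_ord0.
rewrite big_ord_recr IH mkseqS -cats1 wt_cat /= mulr1 last_mkseq.
by case: N {IH}.
Qed.

Lemma momega_Om pi i : momega C M l pi i = Om (pi, i).
Proof.
rewrite /momega.
transitivity (vsum C (fun p : (nat -> seq Gamma) * {js : nat -> 'I_n | inf_often_le l js} =>
  iprod C (fun t => M (match t with 0 => pi | t'.+1 => p.1 t' end) (p.1 t)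
          (match t with 0 => i | t'.+1 => proj1_sig p.2 t' end) (proj1_sig p.2 t)))).
  by rewrite vs_pair.
rewrite /Om.
apply: (vs_reindex
  (h := fun p : (nat -> seq Gamma) * {js : nat -> 'I_n | inf_often_le l js} =>
          exist infc (fun t => (p.1 t, proj1_sig p.2 t)) (proj2_sig p.2))
  (h' := fun x : {rho : nat -> config | infc rho} =>
          ((fun t => (proj1_sig x t).1),
           exist (fun js : nat -> 'I_n => inf_often_le l js) (fun t => (proj1_sig x t).2) (proj2_sig x)))).
- case=> pis [js Hjs] _ /=; split; first by congr (_, _); apply: sigE.
  by congr (iprod C _); apply: functional_extensionality => -[|t].
- case=> rho Hr _ /=; split.
    by apply: sigE => /=; apply: functional_extensionality => t; rewrite -surjective_pairing.
  by congr (iprod C _); apply: functional_extensionality => -[|t].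
Qed.

Lemma Om_first (c : config) : Om c = vsum C (fun d : config => stepw c d *: Om d).
Proof.
rewrite /Om.
transitivity (vsum C (fun p : config * {rho : nat -> config | infc rho} =>
   stepw c p.1 *: iprod C (stepf p.1 (proj1_sig p.2)))); last first.
  by rewrite vs_pair; apply: vs_ext => d; rewrite -vsum_scale.
have i1 : forall x : {rho : nat -> config | infc rho}, infc (fun t => proj1_sig x t.+1).
  by case=> rho Hr; apply/(infc_off (k := 1) (rho := rho)).
have i2 : forall p : config * {rho : nat -> config | infc rho},
    infc (fun t => if t is t'.+1 then proj1_sig p.2 t' else p.1).
  by case=> d [rho Hr]; apply/(infc_off (k := 1) (sig := rho)).
apply: (vs_reindex
  (h := fun x : {rho : nat -> config | infc rho} =>
          (proj1_sig x 0%N, exist infc (fun t => proj1_sig x t.+1) (i1 x)))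
  (h' := fun p => exist infc _ (i2 p))).
- case=> rho Hr _ /=; split.
    by apply: sigE => /=; apply: functional_extensionality => -[|t].
  rewrite [RHS]iprod_shift; congr (_ *: iprod C _).
  by apply: functional_extensionality => -[|t].
- case=> d [rho Hr] _ /=; split; first by congr (_, _); apply: sigE.
  by rewrite iprod_shift; f_equal; f_equal.
Qed.

Lemma Om_nil m : Om ([::], m) = 0.
Proof.
by apply: vs_zero => x; apply: (iprod_zero (t := 0%N)); rewrite /stepf stepw_nil.
Qed.

Definition stripf (r : seq Gamma) (rho : nat -> config) : nat -> config := fun t => strip r (rho t).
Definition appf (r : seq Gamma) (rho : nat -> config) : nat -> config := fun t => app r (rho t).
Definition shiftf (k : nat) (rho : nat -> config) : nat -> config := fun t => rho (k + t)%N.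
Definition catf (L : seq config) (rho : nat -> config) : nat -> config :=
  fun t => if (t < size L)%N then nth (rho 0%N) L t else rho (t - size L)%N.

Lemma infc_stripf r rho : infc rho -> infc (stripf r rho).
Proof. by move/(infc_off (k := 0) (sig := stripf r rho)); apply. Qed.
Lemma infc_appf r rho : infc rho -> infc (appf r rho).
Proof. by move/(infc_off (k := 0) (sig := appf r rho)); apply. Qed.
Lemma infc_shiftf k rho : infc rho -> infc (shiftf k rho).
Proof. by move/(infc_off (k := k) (sig := shiftf k rho)); apply. Qed.
Lemma catf_ge L rho t : catf L rho (size L + t)%N = rho t.
Proof. by rewrite /catf ltnNge leq_addr /= addKn. Qed.
Lemma catf_lt L rho t : (t < size L)%N -> catf L rho t = nth (rho 0%N) L t.
Proof. by rewrite /catf => ->. Qed.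
Lemma infc_catf L rho : infc rho -> infc (catf L rho).
Proof. by move=> H; apply/(infc_off (k := size L) (sig := rho)) => // t; rewrite catf_ge. Qed.

Lemma mkseq_catf L rho : mkseq (catf L rho) (size L) = L.
Proof.
apply: (@eq_from_nth _ (rho 0%N)); rewrite ?size_mkseq // => t tL.
by rewrite nth_mkseq // catf_lt.
Qed.

Lemma ex_minn_eq (P : pred nat) (E : exists n, P n) k :
  P k -> (forall t, (t < k)%N -> ~~ P t) -> ex_minn E = k.
Proof.
move=> Pk H; case: ex_minnP => m Pm Hm.
apply/eqP; rewrite eqn_leq Hm //= leqNgt; apply/negP => mk.
by have := H m mk; rewrite Pm.
Qed.

Lemma stepsnz_rcons c L d : stepsnz c (rcons L d) = stepsnz c L && (stepw (last c L) d != 0).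
Proof. by elim: L c => [|e L IH] c /=; rewrite ?andbT ?IH ?andbA. Qed.

Lemma stepsnz_mkseq c rho N : (forall t, stepf c rho t != 0) -> stepsnz c (mkseq rho N).
Proof.
move=> H; elim: N => [|N IH] //; rewrite mkseqS stepsnz_rcons IH last_mkseq /=.
by have := H N; case: N {IH}.
Qed.

Lemma all_mkseq (P : pred config) rho N t : all P (mkseq rho N) -> (t < N)%N -> P (rho t).
Proof. by rewrite /mkseq all_map => /allP H tN; apply: (H t); rewrite mem_iota. Qed.

Lemma stepw_strip r (c d : config) : suffix r c.1 -> c.1 != r -> suffix r d.1 ->
  stepw (strip r c) (strip r d) = stepw c d.
Proof.
move=> sc nc sd; rewrite /stepw -[in RHS](app_strip sc) -[in RHS](app_strip sd) /= M_app //.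
exact: strip_ne.
Qed.

Lemma stepw_app r (c d : config) : c.1 != [::] -> stepw (app r c) (app r d) = stepw c d.
Proof. by move=> H; rewrite /stepw /= M_app. Qed.

Lemma iprod_nz (s : nat -> S) : iprod C s != 0 -> forall t, s t != 0.
Proof. by move=> H t; apply/negP => /eqP E; move/eqP: H; apply; apply: (iprod_zero E). Qed.

Lemma stepf_shift (c : config) rho k t :
  stepf c rho (k.+1 + t)%N = stepf (rho k) (shiftf k.+1 rho) t.
Proof. by case: t => [|t]; rewrite /stepf /shiftf ?addn0 // addnS addSn. Qed.

Definition TA := {rho : nat -> config | infc rho}.
Definition TB := ('I_n * (seq config * TA))%type.

Definition hsplit (r : seq Gamma) (x : TA) : TA + TB :=
  match excluded_middle_informative (exists t, hit r (proj1_sig x t)) with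
  | left E => let tau := ex_minn E in
      inr ((proj1_sig x tau).2, (map (strip r) (mkseq (proj1_sig x) tau.+1),
            exist infc (shiftf tau.+1 (proj1_sig x)) (@infc_shiftf tau.+1 _ (proj2_sig x))))
  | right _ => inl (exist infc (stripf r (proj1_sig x)) (@infc_stripf r _ (proj2_sig x)))
  end.

Definition hjoin (r : seq Gamma) (y : TA + TB) : TA :=
  match y with
  | inl z => exist infc (appf r (proj1_sig z)) (@infc_appf r _ (proj2_sig z))
  | inr (m, (L1, z)) => exist infc (catf (map (app r) L1) (proj1_sig z)) (@infc_catf _ _ (proj2_sig z))
  end.

Lemma hjoin_inr r m L1 z : proj1_sig (hjoin r (inr (m, (L1, z)))) = catf (map (app r) L1) (proj1_sig z).
Proof. by []. Qed.
Lemma hjoin_inl r z : proj1_sig (hjoin r (inl z)) = appf r (proj1_sig z).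
Proof. by []. Qed.

Lemma Om_split (a : Gamma) (r : seq Gamma) (i : 'I_n) :
  Om (a :: r, i) = Om ([:: a], i) + \sum_(m < n) PS ([:: a], i) ([::], m) *: Om (r, m).
Proof.
pose c0 : config := (a :: r, i).
have sc0 : suffix r c0.1 by exact: (suffix_app r [:: a]).
have nc0 : c0.1 != r by exact: (app_ne r [:: a]).
have sc : strip r c0 = ([:: a], i) by rewrite /strip /= subSnn /= take0.
rewrite /Om.
transitivity (vsum C (fun y : TA + TB => match y with
   | inl z => iprod C (stepf ([:: a], i) (proj1_sig z))
   | inr (m, (L1, z)) => (if last ([:: a], i) L1 == ([::], m) then wt ([:: a], i) L1 else 0)
                          *: iprod C (stepf (r, m) (proj1_sig z)) end)); last first.
  rewrite vs_sum; congr (_ + _).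
  rewrite vs_pair vs_fin; apply: eq_bigr => m _.
  rewrite vs_pair /PS -vsum_scaler; apply: vs_ext => L1; by rewrite -vsum_scale.
apply: (vs_reindex (h := hsplit r) (h' := hjoin r)).
- case=> rho Hr /= Hnz.
  have snz := iprod_nz Hnz.
  rewrite /hsplit; cbn [proj1_sig]; case: excluded_middle_informative => [E|NE].
  + have [htau mintau] : hit r (rho (ex_minn E)) /\ forall t, (t < ex_minn E)%N -> ~~ hit r (rho t).
      case: ex_minnP => m Pm Hm; split => // t tm; apply/negP => Pt.
      by have := Hm t Pt; rewrite leqNgt tm.
    move: (ex_minn E) htau mintau => tau htau mintau.
    have nhL : has (hit r) (mkseq rho tau) = false.
      rewrite /mkseq has_map; apply/negbTE/hasPn => t; rewrite mem_iota add0n => /andP [_ tl].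
      exact: mintau.
    have fL : find (hit r) (mkseq rho tau.+1) = tau.
      by rewrite mkseqS -cats1 find_cat nhL size_mkseq /= htau addn0.
    have sufL : all (fun d => suffix r d.1) (mkseq rho tau.+1).
      have := struct_pref sc0 nc0 (stepsnz_mkseq tau.+1 snz).
      by rewrite fL take_oversize // size_mkseq.
    have suf t : (t <= tau)%N -> suffix r (rho t).1 by move=> tl; apply: (all_mkseq sufL).
    have he : (rho tau).1 = r by apply/eqP.
    split.
      apply: sigE; rewrite hjoin_inr; apply: functional_extensionality => t.
      rewrite /catf 2!size_map size_mkseq; case: ifP => tl.
        rewrite (nth_map (rho 0%N)); last by rewrite size_map size_mkseq.
        rewrite (nth_map (rho 0%N)); last by rewrite size_mkseq.
        by rewrite nth_mkseq // app_strip // suf.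
      by rewrite /= /shiftf subnKC // leqNgt tl.
    have lst : last (strip r c0) (map (strip r) (mkseq rho tau.+1)) = ([::], (rho tau).2).
      by rewrite (last_map (strip r)) last_mkseq /strip he subnn take0.
    rewrite -sc lst eqxx -wt_strip; last first.
    + rewrite mkseqS belast_rcons /= nc0 /= /mkseq all_map; apply/allP => t.
      by rewrite mem_iota add0n => /andP [_ tl]; apply: mintau.
    + by apply/andP; split.
    rewrite -prod_stepf [RHS](iprod_prefix _ tau.+1); congr (_ *: _).
    have -> : (r, (rho tau).2) = rho tau by rewrite -he -surjective_pairing.
    by congr (iprod C _); apply: functional_extensionality => t; rewrite stepf_shift.
  + have nh t : ~~ hit r (rho t) by apply/negP => H; apply: NE; exists t.
    have suf t : suffix r (rho t).1.
      have := struct_pref sc0 nc0 (stepsnz_mkseq t.+1 snz).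
      rewrite hasNfind; last by rewrite /mkseq has_map; apply/hasPn => u _; apply: nh.
      by rewrite take_oversize // => H; apply: (all_mkseq H).
    split.
      by apply: sigE => /=; apply: functional_extensionality => t; rewrite /appf /stripf app_strip.
    congr (iprod C _); apply: functional_extensionality => -[|t]; rewrite /stepf /stripf.
      by rewrite -sc stepw_strip.
    by rewrite stepw_strip ?suf ?nh.
- case=> [[sig Hs]|[m [L1 [sig Hs]]]] /= Hnz.
  + have snz := iprod_nz Hnz.
    have ne t : (sig t).1 != [::] by apply: (stepw_ne (d := sig t.+1)); exact: (snz t.+1).
    rewrite /hsplit /=; case: excluded_middle_informative => [[t Ht]|NE].
      by exfalso; move: Ht; rewrite /hit /appf /app /= -[_ == _]negbK app_ne ne.
    split.
      by congr inl; apply: sigE => /=; apply: functional_extensionality => t; rewrite /appf /stripf strip_app.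
    congr (iprod C _); apply: functional_extensionality => -[|t]; rewrite /stepf /appf.
      by rewrite (@stepw_app r ([:: a], i)).
    by rewrite stepw_app.
  + case: (last ([:: a], i) L1 =P ([::], m)) Hnz => [E1|]; last by rewrite scale0r eqxx.
    move=> Hnz.
    have H1 : wt ([:: a], i) L1 != 0 by apply: contraNneq Hnz => ->; rewrite scale0r.
    case/lastP: L1 E1 H1 Hnz => [|L1' e]; first by move=> /(f_equal fst).
    rewrite last_rcons => Ee H1 Hnz.
    have ne := stepsnz_ne (wt_nz H1); rewrite belast_rcons /= in ne.
    have szL : size (map (app r) (rcons L1' e)) = (size L1').+1 by rewrite size_map size_rcons.
    have rl t : (t < size L1')%N -> catf (map (app r) (rcons L1' e)) sig t = app r (nth e L1' t).
      move=> tl; rewrite catf_lt ?szL ?(ltn_trans tl) //.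
      by rewrite (nth_map e) ?size_rcons ?(ltn_trans tl) // nth_rcons tl.
    have rtau : catf (map (app r) (rcons L1' e)) sig (size L1') = (r, m).
      rewrite catf_lt ?szL //.
      by rewrite (nth_map e) ?size_rcons // nth_rcons ltnn eqxx Ee.
    have rsh t : catf (map (app r) (rcons L1' e)) sig ((size L1').+1 + t)%N = sig t.
      by rewrite -szL catf_ge.
    have mk : mkseq (catf (map (app r) (rcons L1' e)) sig) (size L1').+1 = map (app r) (rcons L1' e).
      by rewrite -{1}szL mkseq_catf.
    rewrite /hsplit; cbn [proj1_sig].
    case: excluded_middle_informative => [E|NE]; last first.
      by exfalso; apply: NE; exists (size L1'); rewrite rtau /hit eqxx.
    have -> : ex_minn E = size L1'.
      apply: ex_minn_eq; first by rewrite rtau /hit eqxx.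
      move=> t tl; rewrite rl // /hit /app /= app_ne.
      by apply: (allP ne); rewrite mem_nth.
    split.
      rewrite rtau mk (mapK (@strip_app r)); congr (inr (_, (_, _))).
      by apply: sigE; apply: functional_extensionality => t; rewrite /shiftf /= rsh.
    rewrite (iprod_prefix _ (size L1').+1) prod_stepf mk (@wt_app r ([:: a], i)); last by rewrite belast_rcons.
    congr (_ *: iprod C _); apply: functional_extensionality => t.
    rewrite stepf_shift rtau; congr (stepf _ _ t).
    by apply: functional_extensionality => u; rewrite /shiftf rsh.
Qed.

Definition brS (i : 'I_n) (p : Gamma) : V := momega C M l [:: p] i.

Fixpoint Gfun (ps : seq Gamma) (m : 'I_n) : V :=
  if ps is a :: ps' then brS m a + \sum_(m' < n) triS m a m' *: Gfun ps' m' else 0.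

Lemma Om_G ps m : Om (ps, m) = Gfun ps m.
Proof.
elim: ps m => [|a ps IH] m /=; first exact: Om_nil.
rewrite Om_split /brS momega_Om; congr (_ + _); apply: eq_bigr => m' _.
by rewrite triS_PS IH.
Qed.

Lemma chainV_cons a ps m k (ms : k.+1.-tuple 'I_n) :
  chainV triS brS (a :: ps) (m :: tval ms) = triS m a (thead ms) *: chainV triS brS ps ms.
Proof. by case/tupleP: ms => m' ms; rewrite theadE. Qed.

Lemma chainV_sum (ps : seq Gamma) (F : 'I_n -> S) :
  \sum_(0 <= jj < size ps) \sum_(ms : jj.+1.-tuple 'I_n) F (thead ms) *: chainV triS brS ps ms =
  \sum_(m < n) F m *: Gfun ps m.
Proof.
elim: ps F => [|a ps IH] F.
  by rewrite big_geq // big1 // => m _; rewrite scaler0.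
rewrite [size _]/= big_nat_recl //.
have E0 : \sum_(ms : 1.-tuple 'I_n) F (thead ms) *: chainV triS brS (a :: ps) ms =
          \sum_(m < n) F m *: brS m a.
  by rewrite vs_tupleS; apply: eq_bigr => m _; rewrite vs_tuple0 theadE.
have E1 : forall jj, \sum_(ms : jj.+2.-tuple 'I_n) F (thead ms) *: chainV triS brS (a :: ps) ms =
   \sum_(m < n) F m *: \sum_(ms : jj.+1.-tuple 'I_n) triS m a (thead ms) *: chainV triS brS ps ms.
  move=> jj; rewrite vs_tupleS; apply: eq_bigr => m _; rewrite scaler_sumr; apply: eq_bigr => ms _.
  by rewrite theadE (chainV_cons a ps m ms) scalerA.
rewrite E0; under eq_bigr => jj _ do rewrite E1.
rewrite exchange_big /=.
under [X in _ + X = _]eq_bigr => m _ do rewrite -scaler_sumr (IH (triS m a)).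
by rewrite -big_split /=; apply: eq_bigr => m _; rewrite scalerDr.
Qed.

Lemma eq4 p i : brS i p = vsum C (fun k : nat =>
  \sum_(ps : k.+1.-tuple Gamma) \sum_(jj < k.+1) \sum_(ms : jj.+1.-tuple 'I_n)
     M [:: p] ps i (thead ms) *: chainV triS brS ps ms).
Proof.
rewrite /brS momega_Om Om_first vs_pair vs_seq vs_nat.
rewrite vs_tuple0 /= vs_fin big1 ?add0r; last by move=> m _; rewrite Om_nil scaler0.
apply: vs_ext => k; apply: eq_bigr => ps _.
rewrite vs_fin -(big_mkord xpredT (fun jj => \sum_(ms : jj.+1.-tuple 'I_n)
     M [:: p] ps i (thead ms) *: chainV triS brS ps ms)).
have := chainV_sum ps (M [:: p] ps i); rewrite size_tuple => ->.
by apply: eq_bigr => m _; rewrite Om_G.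
Qed.

End PDA.

Unset Implicit Arguments. Set Strict Implicit.

Theorem theorem13 (S : pzSemiRingType) (V : lSemiModType S)
  (C : complete_pair S V) (S' : S -> Prop) (n : nat) (Gamma : finType)
  (I : 'I_n -> S) (M : pdmat S Gamma n) (P : 'I_n -> S) (p0 : Gamma) (l : nat) :
  S' 0 -> S' 1 -> omega_pda S' I M P p0 l ->
  let tri := fun (i : 'I_n) (p : Gamma) (j : 'I_n) => mstar C M [:: p] [::] i j in
  let br := fun (i : 'I_n) (p : Gamma) => momega C M l [:: p] i in
  let x0 := behavior_fin C I M P p0 in
  let z0 := behavior_inf C I M p0 l in
  [/\ x0 = \sum_(m1 < n) \sum_(m2 < n) I m1 * tri m1 p0 m2 * P m2,
      forall (p : Gamma) (i j : 'I_n),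
        tri i p j =
        csum C (fun k : nat =>
          \sum_(ps : k.-tuple Gamma) \sum_(ms : k.-tuple 'I_n)
             M [:: p] ps i (head j ms) * chainS tri ps ms j),
      z0 = \sum_(m < n) I m *: br m p0,
      forall (p : Gamma) (i : 'I_n),
        br i p =
        vsum C (fun k : nat =>
          \sum_(ps : k.+1.-tuple Gamma) \sum_(jj < k.+1)
            \sum_(ms : jj.+1.-tuple 'I_n)
               M [:: p] ps i (thead ms) *: chainV tri br ps ms)
    & behavior C I M P p0 l = (behavior_fin C I M P p0, behavior_inf C I M p0 l)].
Proof.
move=> _ _ [_ [HM _]] tri br x0 z0.
split.
- rewrite /x0 /behavior_fin exchange_big /=; apply: eq_bigr => m2 _.
  by rewrite mulr_suml.
- move=> p i j; exact: (eq2 C HM p i j).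
- by [].
- move=> p i; exact: (eq4 C HM l p i).
- by [].
Qed.
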